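(* Let $\Delta$ be a simplicial polytopal fan in $\mathbb{R}^d$ with ray generators $\mathbf{v}_1,\ldots,\mathbf{v}_n$, let $\{(\mathbf{u}^{(i)},y^{(i)})\}_{i=1}^m\subset\mathbb{R}^d\times\mathbb{R}$, $U=(\mathbf{u}^{(1)},\ldots,\mathbf{u}^{(m)})^\mathsf{T}$, $\mathbf{y}=(y^{(i)})_i$. The following are equivalent: (i) the solution set $\hat{P}^\Delta(U,\mathbf{y})$ is unbounded; (ii) there is a polytope $P=P(\mathbf{h})\in\mathcal{P}(\Delta)$ with $\mathbf{h}\ne\mathbf{0}$ such that $h_P(\mathbf{u}^{(i)})=0$ for all $i=1,\ldots,m$; (iii) the cone $\ker A_U\cap\mathcal{P}(\Delta)$ is non-trivial.
   Context: A fan is simplicial if every cone is generated by linearly independent vectors; polytopal if it is the normal fan of a polytope. $h_P(\mathbf{u})=\max_{\mathbf{x}\in P}\langle\mathbf{x},\mathbf{u}\rangle$. For $\mathbf{h}\in\mathbb{R}^n$, $P(\mathbf{h})=\{\mathbf{x}\colon\langle\mathbf{x},\mathbf{v}_i\rangle\le h_i\ \forall i\}$. The deformation cone $\mathcal{P}(\Delta)$ is the set of polytopes whose normal fan is coarsened by $\Delta$, identified via support vectors $\mathbf{h}=(h_P(\mathbf{v}_i))_i$ with a closed polyhedral cone in $\mathbb{R}^n$. For $\mathbf{u}\in\mathbb{R}^d$, with $\sigma$ the cone of $\Delta$ containing $\mathbf{u}$ in its relative interior and $\mathbf{u}=\sum_{k\in I_\sigma}\lambda_k\mathbf{v}_k$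 over the generators of $\sigma$, set $[\mathbf{u}]_i=\lambda_i$ for $i\in I_\sigma$ and $0$ otherwise. $A_U$ is the $m\times n$ matrix with rows $[\mathbf{u}^{(i)}]^\mathsf{T}$. The least-squares estimator $\hat{P}^\Delta(U,\mathbf{y})\subseteq\mathbb{R}^n$ is the set of support vectors of polytopes $P\in\mathcal{P}(\Delta)$ minimizing $\frac1m\sum_i(h_P(\mathbf{u}^{(i)})-y^{(i)})^2$. *)

(* Defs.v *)
From HB Require Import structures.
From mathcomp Require Import all_boot all_order all_algebra.
From mathcomp Require Import boolp classical_sets reals.
Set Implicit Arguments. Unset Strict Implicit. Unset Printing Implicit Defensive.
Import Order.TTheory GRing.Theory Num.Theory.
Local Open Scope ring_scope.
Local Open Scope classical_set_scope.

Section Defs.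
Variables (R : realType) (d n : nat).

Definition dot (x u : 'rV[R]_d) : R := \sum_(j < d) x 0 j * u 0 j.

Definition is_polytope (P : set 'rV[R]_d) : Prop :=
  exists (k : nat) (V : 'I_k.+1 -> 'rV[R]_d),
    P = [set x | exists mu : 'I_k.+1 -> R,
           (forall j, 0 <= mu j) /\ \sum_j mu j = 1 /\ x = \sum_j mu j *: V j].

Definition suppf (P : set 'rV[R]_d) (u : 'rV[R]_d) : R :=
  sup [set dot x u | x in P].

Definition argmax (P : set 'rV[R]_d) (u : 'rV[R]_d) : set 'rV[R]_d :=
  [set x | P x /\ forall y, P y -> dot y u <= dot x u].
Definition is_face (P F : set 'rV[R]_d) : Prop := exists u, F = argmax P u.
Definition normal_cone (P F : set 'rV[R]_d) : set 'rV[R]_d :=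
  [set u | F `<=` argmax P u].

Variable v : 'I_n -> 'rV[R]_d.

Definition gcone (I : {set 'I_n}) : set 'rV[R]_d :=
  [set x | exists c : 'I_n -> R, (forall i, 0 <= c i) /\
           x = \sum_(i in I) c i *: v i].

(* Delta given by a set S of index sets: cones gcone I, I \in S *)
Definition simplicial_fan (S : {set {set 'I_n}}) : Prop :=
  [/\ finset.set0 \in S,
      (forall I J : {set 'I_n}, I \in S -> J \subset I -> J \in S),
      (forall I, I \in S -> forall c : 'I_n -> R,
          \sum_(i in I) c i *: v i = 0 -> forall i, i \in I -> c i = 0),
      (forall I J, I \in S -> J \in S -> gcone I `&` gcone J = gcone (I :&: J))
    & (forall i, [set i]%SET \in S)].

(* the normal fan of Q (cones of nonempty faces) equals Delta *)
Definition polytopal (S : {set {set 'I_n}}) : Prop :=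
  exists Q, is_polytope Q /\
    [set C | exists F, is_face Q F /\ C = normal_cone Q F] =
    [set C | exists I, I \in S /\ C = gcone I].

Definition coarsened_by (S : {set {set 'I_n}}) (P : set 'rV[R]_d) : Prop :=
  forall I, I \in S -> exists F, is_face P F /\ gcone I `<=` normal_cone P F.

Definition in_defo (S : {set {set 'I_n}}) (P : set 'rV[R]_d) : Prop :=
  is_polytope P /\ coarsened_by S P.

Definition suppvec (P : set 'rV[R]_d) : 'cV[R]_n := \col_i suppf P (v i).

Definition defo_cone (S : {set {set 'I_n}}) : set 'cV[R]_n :=
  [set h | exists P, in_defo S P /\ h = suppvec P].

Definition Ph (h : 'cV[R]_n) : set 'rV[R]_d :=
  [set x | forall i, dot x (v i) <= h i 0].

(* lam = [u]: u in relint of the cone of Delta indexed by I *)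
Definition is_coord (S : {set {set 'I_n}}) (u : 'rV[R]_d) (lam : 'cV[R]_n) :=
  exists I, [/\ I \in S, (forall i, i \in I -> 0 < lam i 0),
              (forall i, i \notin I -> lam i 0 = 0) &
              u = \sum_i lam i 0 *: v i].
Definition coord (S : {set {set 'I_n}}) (u : 'rV[R]_d) : 'cV[R]_n :=
  xget 0 (is_coord S u).

Variable m : nat.
Definition AU (S : {set {set 'I_n}}) (U : 'M[R]_(m, d)) : 'M[R]_(m, n) :=
  \matrix_(i < m, k < n) coord S (row i U) k 0.

Definition lsq_obj (U : 'M[R]_(m, d)) (y : 'cV[R]_m) (P : set 'rV[R]_d) : R :=
  m%:R^-1 * \sum_(i < m) (suppf P (row i U) - y i 0) ^+ 2.

Definition lse (S : {set {set 'I_n}}) (U : 'M[R]_(m, d)) (y : 'cV[R]_m)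
  : set 'cV[R]_n :=
  [set h | exists P, [/\ in_defo S P, h = suppvec P &
             forall Q, in_defo S Q -> lsq_obj U y P <= lsq_obj U y Q]].

Definition bounded_vecs (A : set 'cV[R]_n) : Prop :=
  exists M : R, forall h, A h -> forall k, `|h k 0| <= M.

End Defs.

(* Main.v *)
Require Import Defs.
From HB Require Import structures.
From mathcomp Require Import all_boot all_order all_algebra.
From mathcomp Require Import boolp classical_sets reals.
From mathcomp Require Import ring lra.
Require Import Defs.
Import Order.TTheory GRing.Theory Num.Theory.
Local Open Scope ring_scope.
Local Open Scope classical_set_scope.

Set Implicit Arguments. Unset Strict Implicit. Unset Printing Implicit Defensive.


Local Close Scope classical_set_scope.

Section FM.
Variable R : realFieldType.

Lemma sum_delta (T : finType) (l : T) (r : T -> R) :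
  \sum_l0 ((l0 == l)%:R * r l0) = r l.
Proof.
rewrite (bigD1 l) //= eqxx mul1r big1 ?addr0 // => i /negbTE ->.
by rewrite mul0r.
Qed.

Lemma elim1 (T : finType) (r b : T -> R) :
  (exists s, forall l, r l + s * b l <= 0) <->
  ((forall l, b l = 0 -> r l <= 0) /\
   (forall l1 l2, 0 < b l1 -> b l2 < 0 -> (- b l2) * r l1 + b l1 * r l2 <= 0)).
Proof.
split.
  move=> [s Hs]; split.
    by move=> l bl0; have := Hs l; rewrite bl0 mulr0 addr0.
  move=> l1 l2 b1 b2.
  have -> : (- b l2) * r l1 + b l1 * r l2 =
            (- b l2) * (r l1 + s * b l1) + b l1 * (r l2 + s * b l2) by ring.
  have h1 : (- b l2) * (r l1 + s * b l1) <= 0.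
    by rewrite mulr_ge0_le0 // ?oppr_ge0 ?ltW.
  have h2 : b l1 * (r l2 + s * b l2) <= 0 by rewrite mulr_ge0_le0 // ltW.
  lra.
move=> [H0 H2].
have key : forall l s, 0 < b l -> s <= - r l / b l -> r l + s * b l <= 0.
  move=> l s bl hs.
  have : s * b l <= - r l / b l * b l by rewrite ler_pM2r.
  rewrite mulfVK ?gt_eqF //; lra.
have keyn : forall l s, b l < 0 -> - r l / b l <= s -> r l + s * b l <= 0.
  move=> l s bl hs.
  have : s * b l <= - r l / b l * b l by rewrite ler_nM2r.
  rewrite mulfVK ?lt_eqF //; lra.
have ab : forall l, b l = 0 \/ 0 < b l \/ b l < 0.
  move=> l; case: (ltgtP (b l) 0); auto.
case: (pselect (exists l, 0 < b l)) => [[l0 Hl0]|Nup].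
  case: (@arg_minP _ _ _ l0 (fun l => 0 < b l) (fun l => - r l / b l) Hl0) => l1 Hl1 Hmin.
  exists (- r l1 / b l1) => l.
  case: (ab l) => [bl|[bl|bl]]; first by rewrite bl mulr0 addr0; apply: H0.
    by apply: key => //; apply: Hmin.
  apply: keyn => //.
  have := H2 _ _ Hl1 bl.
  move=> h.
  have p1 : 0 < b l1 * (- b l) by rewrite mulr_gt0 // oppr_gt0.
  rewrite -(ler_pM2r p1).
  have e1 : - r l / b l * (b l1 * - b l) = b l1 * r l.
    by field; rewrite lt_eqF.
  have e2 : - r l1 / b l1 * (b l1 * - b l) = b l * r l1.
    by field; rewrite gt_eqF.
  rewrite e1 e2; lra.
exists (\sum_l `|r l / b l|) => l.
case: (ab l) => [bl|[bl|bl]]; first by rewrite bl mulr0 addr0; apply: H0.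
  by exfalso; apply: Nup; exists l.
apply: keyn => //.
rewrite (bigD1 l) //=.
have : 0 <= \sum_(i | i != l) `|r i / b i| by apply: sumr_ge0.
have : - r l / b l <= `|r l / b l|.
  by rewrite mulNr -normrN ler_norm.
lra.
Qed.

Definition linf (V : finType) (B : (V -> R) -> R) :=
  forall c w1 w2, B (fun x => c * w1 x + w2 x) = c * B w1 + B w2.

Lemma linf0 (V : finType) (B : (V -> R) -> R) : linf B -> B (fun _ => 0) = 0.
Proof.
move=> lB; have := lB 1 (fun _ => 0) (fun _ => 0).
have -> : (fun _ : V => 1 * 0 + 0) = (fun _ => 0 : R) by apply: funext => x; rewrite mulr0 addr0.
rewrite mul1r => h; have : B (fun _ => 0) + 0 = B (fun _ => 0) + B (fun _ => 0) by rewrite addr0.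
by move/addrI.
Qed.

Lemma FM_gen (k : nat) (V T : finType) (B : T -> (V -> R) -> R) (F : {set V}) :
  (forall l, linf (B l)) -> #|F| = k ->
  exists (T' : finType) (L : T' -> T -> R), forall a : T -> R,
    (exists w : V -> R, (forall x, x \notin F -> w x = 0) /\
                        forall l, a l + B l w <= 0) <->
    (forall l', \sum_l L l' l * a l <= 0).
Proof.
elim: k T B F => [|k IH] T B F lB cF.
  have F0 : F = finset.set0 by apply/eqP; rewrite -cards_eq0 cF.
  exists T, (fun l' l => (l == l')%:R) => a; split.
    move=> [w [w0 Hw]] l'; rewrite sum_delta.
    have wE : w = (fun _ => 0) by apply: funext => x; apply: w0; rewrite F0 inE.
    by have := Hw l'; rewrite wE linf0 // addr0.
  move=> H; exists (fun _ => 0); split => // l.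
  by rewrite linf0 // addr0; have := H l; rewrite sum_delta.
have : (0 < #|F|)%N by rewrite cF.
case/card_gt0P => v0 v0F.
pose d : V -> R := fun x => (x == v0)%:R.
pose b l := B l d.
pose T1 := (T + (T * T))%type.
pose L1 (q : T1) (l0 : T) : R := match q with
  | inl l => if b l == 0 then (l0 == l)%:R else 0
  | inr (l1, l2) => if (0 < b l1) && (b l2 < 0) then
      (- b l2) * (l0 == l1)%:R + b l1 * (l0 == l2)%:R else 0 end.
have sumL1 : forall q (r : T -> R), \sum_l0 L1 q l0 * r l0 =
   match q with
  | inl l => if b l == 0 then r l else 0
  | inr (l1, l2) => if (0 < b l1) && (b l2 < 0) then
      (- b l2) * r l1 + b l1 * r l2 else 0 end.
  move=> [l|[l1 l2]] r /=.
    case: ifP => _; first by rewrite sum_delta.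
    by rewrite big1 // => i _; rewrite mul0r.
  case: ifP => _; last by rewrite big1 // => i _; rewrite mul0r.
  under eq_bigr => i _ do rewrite mulrDl -!mulrA.
  by rewrite big_split /= -!mulr_sumr !sum_delta.
pose B' (q : T1) (w : V -> R) := \sum_l L1 q l * B l w.
have lB' : forall q, linf (B' q).
  move=> q c w1 w2; rewrite /B' mulr_sumr -big_split /=.
  by apply: eq_bigr => l _; rewrite lB mulrDr mulrCA.
have cF' : #|F :\ v0| = k by move: cF; rewrite (cardsD1 v0) v0F => -[].
have [T2 [L2 HL2]] := IH T1 B' (F :\ v0) lB' cF'.
exists T2, (fun l'' l => \sum_q L2 l'' q * L1 q l) => a.
have conv : forall l'', \sum_l (\sum_q L2 l'' q * L1 q l) * a l =
    \sum_q L2 l'' q * (\sum_l L1 q l * a l).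
  move=> l''; under eq_bigr => l _ do rewrite mulr_suml.
  rewrite exchange_big /=; apply: eq_bigr => q _.
  by rewrite mulr_sumr; apply: eq_bigr => l _; rewrite mulrA.
have Hq : forall w q, (\sum_l L1 q l * a l) + B' q w =
                      \sum_l L1 q l * (a l + B l w).
  by move=> w q; rewrite /B' -big_split /=; apply: eq_bigr => l _; rewrite mulrDr.
have decomp : forall (w : V -> R) l,
    B l w = w v0 * b l + B l (fun x => if x == v0 then 0 else w x).
  move=> w l; rewrite /b -lB; congr (B l); apply: funext => x.
  by rewrite /d; case: eqP => [->|_]; rewrite ?mulr1 ?addr0 ?mulr0 ?add0r.
split.
  move=> [w [wF Hw]] l''; rewrite conv.
  have: forall l', \sum_l L2 l' l * (\sum_l0 L1 l l0 * a l0) <= 0.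
    apply/(HL2 (fun q => \sum_l L1 q l * a l)).
    exists (fun x => if x == v0 then 0 else w x); split.
      move=> x; rewrite in_setD1 negb_and negbK; case: eqP => // _ /= /wF //.
    move=> q; rewrite Hq sumL1.
    pose r l := a l + B l (fun x => if x == v0 then 0 else w x).
    have [E0 E2] : (forall l, b l = 0 -> r l <= 0) /\
      (forall l1 l2, 0 < b l1 -> b l2 < 0 -> (- b l2) * r l1 + b l1 * r l2 <= 0).
      apply/elim1; exists (w v0) => l; have := Hw l; rewrite decomp /r.
      move=> h; lra.
    case: q => [l|[l1 l2]]; case: ifP => //.
      by move/eqP; apply: E0.
    by case/andP; apply: E2.
  by apply.
move=> H.
have : exists w, (forall x, x \notin F :\ v0 -> w x = 0) /\
       forall q, (\sum_l L1 q l * a l) + B' q w <= 0.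
  by apply/HL2 => l''; rewrite -conv.
move=> [w' [w'F Hw']].
pose r l := a l + B l w'.
have [s Hs] : exists s, forall l, r l + s * b l <= 0.
  apply/elim1; split.
    move=> l bl; have := Hw' (inl l); rewrite Hq sumL1 -/(r l) bl eqxx //.
  move=> l1 l2 b1 b2; have := Hw' (inr (l1, l2)); rewrite Hq sumL1 b1 b2 //.
exists (fun x => s * d x + w' x); split.
  move=> x xF; have xv : x != v0 by apply: contraNneq xF => ->.
  by rewrite /d (negbTE xv) mulr0 add0r w'F // in_setD1 xv.
move=> l; rewrite lB -/(b l); have := Hs l; rewrite /r; lra.
Qed.

Lemma FM (V T : finType) (B : T -> (V -> R) -> R) :
  (forall l, linf (B l)) ->
  exists (T' : finType) (L : T' -> T -> R), forall a : T -> R,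
    (exists w : V -> R, forall l, a l + B l w <= 0) <->
    (forall l', \sum_l L l' l * a l <= 0).
Proof.
move=> lB; have [T' [L HL]] := FM_gen lB (erefl #|[set: V]|).
exists T', L => a; rewrite -HL; split.
  by move=> [w Hw]; exists w; split => // x; rewrite inE.
by move=> [w [_ Hw]]; exists w.
Qed.

End FM.


Local Open Scope classical_set_scope.

Section Geo.
Variables (R : realType) (d n : nat) (v : 'I_n -> 'rV[R]_d).
Implicit Types (x u w : 'rV[R]_d) (P : set 'rV[R]_d).

Lemma dotDl x1 x2 u : dot (x1 + x2) u = dot x1 u + dot x2 u.
Proof. by rewrite /dot -big_split; apply: eq_bigr => j _; rewrite mxE mulrDl. Qed.
Lemma dotZl c x u : dot (c *: x) u = c * dot x u.
Proof. by rewrite /dot mulr_sumr; apply: eq_bigr => j _; rewrite mxE mulrA. Qed.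
Lemma dotDr x u1 u2 : dot x (u1 + u2) = dot x u1 + dot x u2.
Proof. by rewrite /dot -big_split; apply: eq_bigr => j _; rewrite mxE mulrDr. Qed.
Lemma dotZr c x u : dot x (c *: u) = c * dot x u.
Proof. by rewrite /dot mulr_sumr; apply: eq_bigr => j _; rewrite mxE mulrCA. Qed.
Lemma dot0l u : dot 0 u = 0.
Proof. by rewrite /dot big1 // => j _; rewrite mxE mul0r. Qed.
Lemma dot0r x : dot x 0 = 0.
Proof. by rewrite /dot big1 // => j _; rewrite mxE mulr0. Qed.
Lemma dot_suml (I : finType) (A : {pred I}) (f : I -> 'rV[R]_d) u :
  dot (\sum_(i in A) f i) u = \sum_(i in A) dot (f i) u.
Proof.
rewrite /dot; under eq_bigr => j _ do rewrite summxE mulr_suml.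
by rewrite exchange_big.
Qed.
Lemma dot_sumr (I : finType) (A : {pred I}) (f : I -> 'rV[R]_d) x :
  dot x (\sum_(i in A) f i) = \sum_(i in A) dot x (f i).
Proof.
rewrite /dot; under eq_bigr => j _ do rewrite summxE mulr_sumr.
by rewrite exchange_big.
Qed.

Lemma sup_attained (E : set R) (r : R) : E r -> (forall y, E y -> y <= r) -> sup E = r.
Proof.
move=> Ex ub; apply/eqP; rewrite eq_le; apply/andP; split.
  by apply: ge_sup; [exists r | exact: ub].
by apply: sup_upper_bound => //; split; [exists r | exists r; exact: ub].
Qed.

Lemma suppf_max P x0 u : P x0 -> (forall x, P x -> dot x u <= dot x0 u) ->
  suppf P u = dot x0 u.
Proof.
move=> Px0 H; apply: sup_attained; first by exists x0.
by move=> _ [x Px <-]; exact: H.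
Qed.

Definition conv (k : nat) (V : 'I_k.+1 -> 'rV[R]_d) : set 'rV[R]_d :=
  [set x | exists mu : 'I_k.+1 -> R,
           (forall j, 0 <= mu j) /\ \sum_j mu j = 1 /\ x = \sum_j mu j *: V j].

Lemma conv_vert k (V : 'I_k.+1 -> 'rV[R]_d) i : conv V (V i).
Proof.
exists (fun j => (j == i)%:R); split; first by move=> j; rewrite ler0n.
split; first by rewrite (bigD1 i) //= eqxx big1 ?addr0 // => j /negbTE ->.
rewrite (bigD1 i) //= eqxx scale1r big1 ?addr0 // => j /negbTE ->.
by rewrite scale0r.
Qed.

Lemma conv_ub k (V : 'I_k.+1 -> 'rV[R]_d) u M :
  (forall i, dot (V i) u <= M) -> forall x, conv V x -> dot x u <= M.
Proof.
move=> H x [mu [mu0 [mu1 ->]]].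
rewrite dot_suml; under eq_bigr => j _ do rewrite dotZl.
have -> : M = \sum_j mu j * M by rewrite -mulr_suml mu1 mul1r.
by apply: ler_sum => j _; rewrite ler_wpM2l.
Qed.

Lemma poly_max P u : is_polytope P ->
  exists x0, P x0 /\ forall x, P x -> dot x u <= dot x0 u.
Proof.
move=> [k [V ->]].
have [i0 _ Hi0] := @arg_maxP _ _ _ ord0 xpredT (fun i => dot (V i) u) erefl.
exists (V i0); split; first exact: conv_vert.
by apply: conv_ub => i; apply: Hi0.
Qed.

Lemma poly_ne P : is_polytope P -> exists x, P x.
Proof. by move=> /(poly_max 0) [x [Px _]]; exists x. Qed.

Lemma suppf_ub P u x : is_polytope P -> P x -> dot x u <= suppf P u.
Proof.
move=> pP Px; have [x0 [Px0 H]] := poly_max u pP.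
by rewrite (suppf_max Px0 H); apply: H.
Qed.

Variable S : {set {set 'I_n}}.

Lemma gcone_vert (I : {set 'I_n}) i : i \in I -> gcone v I (v i).
Proof.
move=> iI; exists (fun j => (j == i)%:R); split; first by move=> j; rewrite ler0n.
rewrite (bigD1 i) //= eqxx scale1r big1 ?addr0 // => j /andP[_ /negbTE ->].
by rewrite scale0r.
Qed.

Lemma defo_common P (I : {set 'I_n}) : in_defo v S P -> I \in S ->
  exists x0, P x0 /\ forall w, gcone v I w -> forall x, P x -> dot x w <= dot x0 w.
Proof.
move=> [pP cP] IS; have [F [[u0 ->] sub]] := cP I IS.
have [x0 [Px0 H0]] := poly_max u0 pP.
have Fx0 : argmax P u0 x0 by split.
exists x0; split => // w /sub /(_ _ Fx0) [_ Hw] x Px; exact: Hw.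
Qed.

Lemma defo_lin P (I : {set 'I_n}) (c : 'I_n -> R) : in_defo v S P -> I \in S ->
  (forall i, 0 <= c i) ->
  suppf P (\sum_(i in I) c i *: v i) = \sum_(i in I) c i * suppf P (v i).
Proof.
move=> dP IS c0; have [x0 [Px0 H]] := defo_common dP IS.
rewrite (suppf_max Px0 (H _ _)); last by exists c.
rewrite dot_sumr; apply: eq_bigr => i iI.
by rewrite dotZr (suppf_max Px0 (H _ (gcone_vert iI))).
Qed.

Lemma complete u : polytopal v S -> exists I, I \in S /\ gcone v I u.
Proof.
move=> [Q [pQ E]].
have : [set C | exists F, is_face Q F /\ C = normal_cone Q F] (normal_cone Q (argmax Q u)).
  by exists (argmax Q u); split => //; exists u.
rewrite E => -[I [IS EI]]; exists I; split => //.
by rewrite -EI => x.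
Qed.

Lemma coordP u : simplicial_fan v S -> polytopal v S -> is_coord v S u (coord v S u).
Proof.
move=> [S0 Ssub _ _ _] pS; apply: xgetPex.
have [I [IS [c [c0 ->]]]] := complete u pS.
pose J := [set i in I | c i != 0].
exists (\col_i (if i \in J then c i else 0)), J; split.
- apply: (Ssub I J IS); apply/fintype.subsetP => i; rewrite inE => /andP[] //.
- move=> i iJ; rewrite mxE iJ lt_def c0 andbT.
  by move: iJ; rewrite inE => /andP[].
- by move=> i /negbTE iJ; rewrite mxE iJ.
rewrite [RHS](bigID (mem I)) /= [X in _ = _ + X]big1 ?addr0; last first.
  by move=> i /negbTE iI; rewrite mxE inE iI scale0r.
apply: eq_bigr => i iI; rewrite mxE inE iI /=.
by case: eqP => [->|]; rewrite ?scale0r.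
Qed.

Lemma coord_lin P u : simplicial_fan v S -> polytopal v S -> in_defo v S P ->
  suppf P u = \sum_k coord v S u k 0 * suppf P (v k).
Proof.
move=> sS pS dP; have [I [IS lpos lzero uE]] := coordP u sS pS.
have c0 : forall i, 0 <= coord v S u i 0.
  by move=> i; case: (boolP (i \in I)) => iI; [rewrite ltW // lpos | rewrite lzero].
have uE' : u = \sum_(i in I) coord v S u i 0 *: v i.
  rewrite {1}uE (bigID (mem I)) /= [X in _ + X]big1 ?addr0 //.
  by move=> i iI; rewrite lzero // scale0r.
rewrite {1}uE' defo_lin // [RHS](bigID (mem I)) /= [X in _ = _ + X]big1 ?addr0 //.
by move=> i iI; rewrite lzero // mul0r.
Qed.

Variable m : nat.

Lemma AU_suppvec (U : 'M[R]_(m, d)) P i : simplicial_fan v S -> polytopal v S ->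
  in_defo v S P -> (AU v S U *m suppvec v P) i 0 = suppf P (row i U).
Proof.
move=> sS pS dP; rewrite mxE (coord_lin _ sS pS dP).
by apply: eq_bigr => k _; rewrite !mxE.
Qed.

End Geo.


Section Geo2.
Variables (R : realType) (d n : nat) (v : 'I_n -> 'rV[R]_d).
Variable S : {set {set 'I_n}}.

Definition Dcond (h : 'cV[R]_n) (X : {set 'I_n} -> 'rV[R]_d) :=
  forall I, I \in S -> (forall j, j \in I -> dot (X I) (v j) = h j 0) /\
                      (forall j, dot (X I) (v j) <= h j 0).

Lemma defo_Dcond h : defo_cone v S h -> exists X, Dcond h X.
Proof.
move=> [P [dP ->]].
have [X HX] : exists X : {set 'I_n} -> 'rV[R]_d, forall I, I \in S ->
    P (X I) /\ forall w, gcone v I w -> forall y, P y -> dot y w <= dot (X I) w.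
  suff [f Hf] : {f : {set 'I_n} -> 'rV[R]_d & forall I, I \in S -> P (f I) /\ forall w, gcone v I w ->
                     forall y, P y -> dot y w <= dot (f I) w} by exists f.
  apply: (@choice _ _ (fun I x => I \in S -> P x /\ forall w, gcone v I w ->
                     forall y, P y -> dot y w <= dot x w)) => I; case: (boolP (I \in S)) => IS.
    by have [x0 Hx0] := defo_common dP IS; exists x0.
  by exists 0.
exists X => I IS; have [PX H] := HX I IS; split.
  move=> j jI; rewrite mxE; apply/esym/suppf_max => //.
  by apply: H; apply: gcone_vert.
by move=> j; rewrite mxE; apply: suppf_ub => //; case: dP.
Qed.

Hypothesis sS : simplicial_fan v S.

Lemma Dcond_defo h X : Dcond h X -> defo_cone v S h.
Proof.
move=> DX; have [S0 Ssub _ _ S1] := sS.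
pose s := enum S.
have cS : (0 < #|S|)%N by apply/card_gt0P; exists finset.set0.
pose N := #|S|.-1.
have sz : size s = N.+1 by rewrite /s -cardE /N prednK.
pose V (i : 'I_N.+1) := X (nth finset.set0 s i).
have Vmem : forall i : 'I_N.+1, nth finset.set0 s i \in S.
  by move=> i; rewrite -mem_enum mem_nth // sz.
have Vall : forall I, I \in S -> exists i, V i = X I.
  move=> I IS; have iI : (index I s < N.+1)%N by rewrite -sz index_mem mem_enum.
  by exists (Ordinal iI); rewrite /V /= nth_index // mem_enum.
pose P := conv V.
have Pub : forall x, P x -> forall j, dot x (v j) <= h j 0.
  move=> x Px j; apply: (conv_ub _ Px) => i.
  by have [_ ] := DX _ (Vmem i); apply.
have PX : forall I, I \in S -> P (X I).
  by move=> I /Vall [i <-]; apply: conv_vert.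
have hE : suppvec v P = h.
  apply/matrixP => j k; rewrite (ord1 k) mxE.
  have jj : j \in [set j]%SET by rewrite inE.
  have E := proj1 (DX _ (S1 j)) j jj.
  rewrite (suppf_max (PX _ (S1 j))) ?E //.
  by move=> x Px; apply: Pub.
exists P; split => //; split; first by exists N, V.
move=> I IS; exists (argmax P (\sum_(i in I) v i)); split; first by exists (\sum_(i in I) v i).
move=> _ [c [c0 ->]] x [Px Hx]; split => // y Py.
have xI : forall i, i \in I -> dot x (v i) = h i 0.
  have := Hx _ (PX _ IS); rewrite !dot_sumr => le.
  have e : \sum_(i in I) (h i 0 - dot x (v i)) = 0.
    apply/eqP; rewrite eq_le; apply/andP; split.
      rewrite sumrB subr_le0; apply: le_trans le.
      by rewrite le_eqVlt; apply/orP; left; apply/eqP/eq_bigr => i iI; rewrite (proj1 (DX _ IS)).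
    by apply: sumr_ge0 => i _; rewrite subr_ge0 Pub.
  move=> i iI; apply/eqP; rewrite eq_sym -subr_eq0; apply/eqP.
  by apply: (psumr_eq0P _ e) => // j _; rewrite subr_ge0 Pub.
rewrite !dot_sumr; apply: ler_sum => i iI; rewrite !dotZr xI //.
by rewrite ler_wpM2l // Pub.
Qed.

Lemma defo_comb a b h1 h2 : 0 <= a -> 0 <= b ->
  defo_cone v S h1 -> defo_cone v S h2 -> defo_cone v S (a *: h1 + b *: h2).
Proof.
move=> a0 b0 /defo_Dcond [X1 D1] /defo_Dcond [X2 D2].
apply: (@Dcond_defo _ (fun I => a *: X1 I + b *: X2 I)) => I IS.
have [E1 L1] := D1 I IS; have [E2 L2] := D2 I IS.
split.
  by move=> j jI; rewrite dotDl !dotZl E1 // E2 // !mxE.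
move=> j; rewrite dotDl !dotZl !mxE; apply: lerD; by rewrite ler_wpM2l.
Qed.

Lemma defo0 : defo_cone v S 0.
Proof.
apply: (@Dcond_defo _ (fun _ => 0)) => I IS; split.
  by move=> j _; rewrite dot0l mxE.
by move=> j; rewrite dot0l mxE.
Qed.

End Geo2.


Section Sep.
Variables (R : realType) (d n : nat) (v : 'I_n -> 'rV[R]_d).
Variable S : {set {set 'I_n}}.

Definition sg (b : bool) : R := if b then 1 else -1.

Section ConvFM.
Variables (k : nat) (V : 'I_k.+1 -> 'rV[R]_d).

Definition Tc := ('I_k.+1 + (bool + ('I_d * bool)))%type.

Definition Bc (l : Tc) (mu : 'I_k.+1 -> R) : R :=
  match l with
  | inl i => - mu i
  | inr (inl b) => sg b * \sum_i mu i
  | inr (inr (j, b)) => - sg b * \sum_i mu i * V i 0 j end.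

Definition ac (z : 'rV[R]_d) (l : Tc) : R :=
  match l with
  | inl _ => 0
  | inr (inl b) => - sg b
  | inr (inr (j, b)) => sg b * z 0 j end.

Lemma Bc_lin l : linf (Bc l).
Proof.
move=> c w1 w2; case: l => [i|[b|[j b]]] /=.
- ring.
- rewrite big_split /= -mulr_sumr; ring.
- under eq_bigr => i _ do rewrite mulrDl -mulrA.
  rewrite big_split /= -mulr_sumr; ring.
Qed.

Lemma feasE z : (exists mu, forall l, ac z l + Bc l mu <= 0) <-> conv V z.
Proof.
split.
  move=> [mu H]; exists mu; split.
    by move=> j; have := H (inl j); rewrite /= add0r oppr_le0.
  split.
    have := H (inr (inl true)); have := H (inr (inl false)); rewrite /sg /=; lra.
  apply/matrixP => i j; rewrite (ord1 i) summxE.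
  under [RHS]eq_bigr => i' _ do rewrite mxE.
  have := H (inr (inr (j, true))); have := H (inr (inr (j, false))); rewrite /sg /=; lra.
move=> [mu [mu0 [mu1 ->]]]; exists mu => -[i|[b|[j b]]] /=.
- by rewrite add0r oppr_le0.
- by rewrite mu1 mulr1 addNr.
- rewrite summxE; under [X in _ * X]eq_bigr => i' _ do rewrite mxE.
  rewrite mulNr subrr //.
Qed.

End ConvFM.

Hypotheses (sS : simplicial_fan v S) (pS : polytopal v S).

Lemma defo_Ph P : in_defo v S P -> P = Ph v (suppvec v P).
Proof.
move=> dP; have [pP _] := dP.
apply/seteqP; split.
  by move=> x Px i; rewrite mxE; apply: suppf_ub.
move=> x Hx; have [k [V PE]] := pP.
have [T' [L HL]] := FM (@Bc_lin k V).
have : conv V x; last by rewrite PE.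
apply/feasE/HL => l'; rewrite leNgt; apply/negP => pos.
pose coef (l : Tc k) (j : 'I_d) : R :=
  match l with inr (inr (j', b)) => if j' == j then sg b else 0 | _ => 0 end.
pose e0 (l : Tc k) : R := match l with inr (inl b) => - sg b | _ => 0 end.
pose c : 'rV[R]_d := \row_j \sum_l L l' l * coef l j.
pose e := \sum_l L l' l * e0 l.
have phiE : forall z, \sum_l L l' l * ac z l = dot z c + e.
  move=> z.
  have -> : dot z c = \sum_l L l' l * \sum_j z 0 j * coef l j.
    rewrite /dot; under eq_bigr => j _ do rewrite mxE mulr_sumr.
    rewrite exchange_big; apply: eq_bigr => l _; rewrite mulr_sumr.
    by apply: eq_bigr => j _; rewrite mulrCA.
  rewrite /e -big_split /=; apply: eq_bigr => l _; rewrite -mulrDr; congr (_ * _).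
  case: l => [i|[b|[j' b]]] /=.
  - by rewrite big1 ?addr0 // => j _; rewrite mulr0.
  - by rewrite big1 ?add0r // => j _; rewrite mulr0.
  - rewrite addr0 (bigD1 j') //= eqxx big1 ?addr0 1?mulrC //.
    by move=> j /negbTE; rewrite eq_sym => ->; rewrite mulr0.
have Pphi : forall y, P y -> dot y c + e <= 0.
  move=> y; rewrite PE => /feasE /HL /(_ l'); by rewrite phiE.
have [x0 [Px0 Hx0]] := poly_max c pP.
have [I [IS [g [g0 cE]]]] := complete c pS.
have : dot x c <= dot x0 c.
  rewrite -(suppf_max Px0 Hx0) cE (defo_lin dP IS g0) dot_sumr.
  apply: ler_sum => i _; rewrite dotZr ler_wpM2l //.
  by have := Hx i; rewrite mxE.
have := Pphi _ Px0; move: pos; rewrite phiE; lra.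
Qed.

End Sep.


Section Enc.
Variables (R : realType) (d n : nat) (v : 'I_n -> 'rV[R]_d).
Variable S : {set {set 'I_n}}.
Hypotheses (sS : simplicial_fan v S) (pS : polytopal v S).

Definition Wt := ('I_n + ({set 'I_n} * 'I_d))%type.
Definition hof (w : Wt -> R) : 'cV[R]_n := \col_j w (inl j).
Definition Xof (w : Wt -> R) (I : {set 'I_n}) : 'rV[R]_d := \row_k w (inr (I, k)).
Definition TC := ({set 'I_n} * 'I_n * bool)%type.
Definition BC (l : TC) (w : Wt -> R) : R :=
  let: (K, j, b) := l in
  if K \in S then
    (if b then (if j \in K then w (inl j) - dot (Xof w K) (v j) else 0)
     else dot (Xof w K) (v j) - w (inl j))
  else 0.

Lemma Xof_lin c w1 w2 I :
  Xof (fun x => c * w1 x + w2 x) I = c *: Xof w1 I + Xof w2 I.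
Proof. by apply/matrixP => i j; rewrite !mxE. Qed.

Lemma BC_lin l : linf (BC l).
Proof.
move=> c w1 w2; case: l => [[K j] b] /=.
case: (K \in S); last by rewrite mulr0 addr0.
rewrite Xof_lin dotDl dotZl.
case: b; last by ring.
case: (j \in K); last by rewrite mulr0 addr0.
ring.
Qed.

Lemma Cenc h : defo_cone v S h <-> exists w, hof w = h /\ forall l, BC l w <= 0.
Proof.
split.
  move=> /defo_Dcond [X DX].
  exists (fun q => match q with inl j => h j 0 | inr (K, k) => X K 0 k end).
  have XE : forall I, Xof (fun q => match q with inl j => h j 0 | inr (K, k) => X K 0 k end) I = X I.
    by move=> I; apply/matrixP => i k; rewrite (ord1 i) mxE.
  split; first by apply/matrixP => j k; rewrite (ord1 k) mxE.
  move=> [[K j] b] /=; rewrite XE; case: ifP => // IS.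
  have [E L] := DX K IS.
  case: b; last by rewrite subr_le0.
  by case: ifP => // jI; rewrite E // subrr.
move=> [w [<- Hw]]; apply: (Dcond_defo sS (X := Xof w)).
move=> I IS; split.
  move=> j jI; have := Hw (I, j, true); have := Hw (I, j, false).
  rewrite /= IS jI mxE; lra.
by move=> j; have := Hw (I, j, false); rewrite /= IS mxE subr_le0.
Qed.

Variables (m : nat) (U : 'M[R]_(m, d)) (y : 'cV[R]_m).

Definition Fobj (h : 'cV[R]_n) : R :=
  m%:R^-1 * \sum_(i < m) ((AU v S U *m h) i 0 - y i 0) ^+ 2.

Lemma obj_Fobj P : in_defo v S P -> lsq_obj U y P = Fobj (suppvec v P).
Proof.
move=> dP; rewrite /lsq_obj /Fobj; congr (_ * _); apply: eq_bigr => i _.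
by rewrite AU_suppvec.
Qed.

Lemma lse_iff h : lse v S U y h <->
  defo_cone v S h /\ forall h', defo_cone v S h' -> Fobj h <= Fobj h'.
Proof.
split.
  move=> [P [dP -> H]]; split; first by exists P.
  by move=> _ [Q [dQ ->]]; rewrite -!obj_Fobj //; apply: H.
move=> [[P [dP hE]] H]; exists P; split => // Q dQ.
by rewrite !obj_Fobj // -hE; apply: H; exists Q.
Qed.

Lemma lse_sameA h1 h2 : lse v S U y h1 -> lse v S U y h2 ->
  AU v S U *m h1 = AU v S U *m h2.
Proof.
move=> /lse_iff [C1 H1] /lse_iff [C2 H2].
case: (posnP m) => [m0|mpos].
  by apply/matrixP => i; have := ltn_ord i; rewrite {2}m0.
pose A := AU v S U.
pose hm := 2^-1 *: h1 + 2^-1 *: h2.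
have Cm : defo_cone v S hm by apply: defo_comb; rewrite // invr_ge0 ler0n.
have e12 : Fobj h1 = Fobj h2.
  by apply/eqP; rewrite eq_le H1 // H2.
have le1 := H1 _ Cm.
pose z1 i := (A *m h1) i 0 - y i 0.
pose z2 i := (A *m h2) i 0 - y i 0.
have zm : forall i, (A *m hm) i 0 - y i 0 = (z1 i + z2 i) / 2.
  move=> i; rewrite /z1 /z2 /hm mulmxDr -!scalemxAr !mxE; field; rewrite ?pnatr_eq0 ?oner_eq0 //.
have Sm : \sum_i ((A *m hm) i 0 - y i 0) ^+ 2 =
   2^-1 * \sum_i z1 i ^+ 2 + 2^-1 * \sum_i z2 i ^+ 2 - 4^-1 * \sum_i (z1 i - z2 i) ^+ 2.
  rewrite !mulr_sumr -big_split -sumrB /=; apply: eq_bigr => k _; rewrite zm; field; rewrite ?pnatr_eq0 ?oner_eq0 //.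
have q0 : 0 < m%:R^-1 :> R by rewrite invr_gt0 ltr0n.

have Dge : 0 <= \sum_i (z1 i - z2 i) ^+ 2 by apply: sumr_ge0 => i _; rewrite sqr_ge0.
have D0 : \sum_i (z1 i - z2 i) ^+ 2 <= 0.
  have E1 : Fobj h1 = m%:R^-1 * \sum_i z1 i ^+ 2 by [].
  have E2 : Fobj h2 = m%:R^-1 * \sum_i z2 i ^+ 2 by [].
  have Em : Fobj hm = m%:R^-1 * \sum_i ((A *m hm) i 0 - y i 0) ^+ 2 by [].
  rewrite E1 E2 in e12; rewrite E1 Em Sm in le1.
  have : m%:R^-1 * \sum_i (z1 i - z2 i) ^+ 2 <= 0 by lra.
  by rewrite pmulr_rle0.
have SZ : \sum_i (z1 i - z2 i) ^+ 2 = 0 by apply/eqP; rewrite eq_le D0 Dge.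
have Z : forall i, (z1 i - z2 i) ^+ 2 = 0.
  by move=> i; apply: (psumr_eq0P _ SZ) => // j _; exact: sqr_ge0.
apply/matrixP => i k; rewrite (ord1 k).
have := Z i; move/eqP; rewrite sqrf_eq0 subr_eq0 /z1 /z2 => /eqP; lra.
Qed.

End Enc.


Section Rec.
Variables (R : realType) (d n : nat) (v : 'I_n -> 'rV[R]_d).
Variable S : {set {set 'I_n}}.
Hypotheses (sS : simplicial_fan v S) (pS : polytopal v S).
Variables (m : nat) (U : 'M[R]_(m, d)).

Lemma hof_lin c (w1 w2 : Wt d n -> R) :
  hof (fun x => c * w1 x + w2 x) = c *: hof w1 + hof w2.
Proof. by apply/matrixP => i j; rewrite !mxE. Qed.

Lemma AUhof_lin i (b : bool) : linf (fun w : Wt d n -> R => sg R b * (AU v S U *m hof w) i 0).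
Proof.
move=> c w1 w2 /=; rewrite hof_lin mulmxDr -scalemxAr !mxE; ring.
Qed.

Definition TR := ((TC n + ('I_m * bool)) + unit)%type.

Lemma recession (z : 'cV[R]_m) (k : 'I_n) (s : R) :
  (forall T, exists h, defo_cone v S h /\ AU v S U *m h = z /\ T <= s * h k 0) ->
  exists g, [/\ defo_cone v S g, AU v S U *m g = 0 & 1 <= s * g k 0].
Proof.
move=> Hyp.
pose BR (l : TR) (w : Wt d n -> R) : R := match l with
 | inl (inl l0) => BC v S l0 w
 | inl (inr (i, b)) => sg R b * (AU v S U *m hof w) i 0
 | inr _ => - s * w (inl k) end.
have lBR : forall l, linf (BR l).
  move=> [[l0|[i b]]|u].
  - exact: BC_lin.
  - exact: AUhof_lin.
  - by move=> c w1 w2 /=; ring.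
have [T' [L HL]] := FM lBR.
pose c0 (l : TR) : R := match l with inl (inr (i, b)) => - sg R b * z i 0 | _ => 0 end.
pose c1 (l : TR) : R := match l with inr _ => 1 | _ => 0 end.
have feas : forall t, exists w, forall l, (c0 l + t * c1 l) + BR l w <= 0.
  move=> t; have [h [Ch [Ah th]]] := Hyp t.
  have [w [hw Bw]] := (Cenc sS h).1 Ch.
  exists w => -[[l0|[i b]]|u] /=.
  - by rewrite mulr0 !add0r.
  - by rewrite mulr0 addr0 hw Ah mulNr addNr.
  - have hk : h k 0 = w (inl k) by rewrite -hw mxE.
    rewrite add0r mulr1 -hk; lra.
have beta : forall l', \sum_l L l' l * c1 l <= 0.
  move=> l'; rewrite leNgt; apply/negP => bpos.
  set be := \sum_l L l' l * c1 l in bpos.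
  set al := \sum_l L l' l * c0 l.
  pose t := (`|al| + 1) / be.
  have := (HL (fun l => c0 l + t * c1 l)).1 (feas t) l'.
  have -> : \sum_l L l' l * (c0 l + t * c1 l) = al + t * be.
    by rewrite /al /be mulr_sumr -big_split /=; apply: eq_bigr => l _; ring.
  rewrite /t mulfVK ?gt_eqF //.
  have := ler_norm (- al); rewrite normrN; lra.
have [w Hw] := (HL c1).2 beta.
exists (hof w); split.
- apply/(Cenc sS); exists w; split => // l0.
  by have := Hw (inl (inl l0)); rewrite /= add0r.
- apply/matrixP => i j; rewrite (ord1 j) [RHS]mxE.
  have := Hw (inl (inr (i, true))); have := Hw (inl (inr (i, false))).
  rewrite /= /sg !add0r mul1r mulN1r; lra.
- have := Hw (inr tt); rewrite /= mxE; lra.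
Qed.

End Rec.


From mathcomp Require Import topology normedtype derive.
Import numFieldNormedType.Exports.
Require Import Defs.

Lemma cont_sum (R : realType) (T : topologicalType) (I : finType) (F : I -> T -> R) :
  (forall i, continuous (F i)) -> continuous (fun x => \sum_i F i x).
Proof. by move=> H; apply: continuous_big => //; exact: add_continuous. Qed.

Lemma cont_mulc (R : realType) (T : topologicalType) (c : R) (f : T -> R) :
  continuous f -> continuous (fun x => c * f x).
Proof.
move=> cf x. apply: cvgM. exact: cvg_cst. exact: cf.
Qed.
Lemma cont_sq (R : realType) (T : topologicalType) (f : T -> R) :
  continuous f -> continuous (fun x => f x ^+ 2).
Proof. move=> cf x.
have -> : (fun x => f x ^+ 2) = (fun x => f x * f x) by apply: funext => z; rewrite expr2.
apply: cvgM; exact: cf. Qed.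
Lemma cont_subc (R : realType) (T : topologicalType) (c : R) (f : T -> R) :
  continuous f -> continuous (fun x => f x - c).
Proof.
move=> cf x; apply: cvgB. exact: cf. exact: cvg_cst.
Qed.

Section Exist.
Variables (R : realType) (d n : nat) (v : 'I_n -> 'rV[R]_d).
Variable S : {set {set 'I_n}}.
Hypotheses (sS : simplicial_fan v S) (pS : polytopal v S).
Variables (m : nat) (U : 'M[R]_(m, d)) (y : 'cV[R]_m).

Definition TE := (TC n + ('I_m * bool))%type.

Lemma exist_min : exists h0, defo_cone v S h0 /\
  forall h', defo_cone v S h' -> Fobj v S U y h0 <= Fobj v S U y h'.
Proof.
pose A := AU v S U.
pose BE (l : TE) (w : Wt d n -> R) : R := match l with
 | inl l0 => BC v S l0 w
 | inr (i, b) => sg R b * (A *m hof w) i 0 end.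
have lBE : forall l, linf (BE l).
  move=> [l0|[i b]]; [exact: BC_lin | exact: AUhof_lin].
have [T' [L HL]] := FM lBE.
pose aZ (z : 'rV[R]_m) (l : TE) : R := match l with
 | inl _ => 0 | inr (i, b) => - sg R b * z 0 i end.
pose Zset := [set z : 'rV[R]_m | exists h, defo_cone v S h /\ forall i, (A *m h) i 0 = z 0 i].
pose phi (l' : T') (z : 'rV[R]_m) := \sum_l L l' l * aZ z l.
have ZE : Zset = \bigcap_(l' in setT) (phi l' @^-1` [set r | r <= 0]).
  apply/seteqP; split.
    move=> z [h [Ch Ah]] l' _ /=; rewrite /phi.
    have [w [hw Bw]] := (Cenc sS h).1 Ch.
    apply: (HL (aZ z)).1; exists w => -[l0|[i b]] /=.
      by rewrite add0r.
    by rewrite hw Ah mulNr addNr.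
  move=> z Hz; have [w Hw] := (HL (aZ z)).2 (fun l' => Hz l' I).
  exists (hof w); split.
    by apply/(Cenc sS); exists w; split => // l0; have := Hw (inl l0); rewrite /= add0r.
  move=> i; have := Hw (inr (i, true)); have := Hw (inr (i, false)).
  rewrite /= /sg; lra.
have cZ : closed Zset.
  rewrite ZE; apply: closed_bigI => l' _; apply: preimage_closed; last exact: closed_le.
  move=> z _; apply: cont_sum => l; apply: cont_mulc.
  case: l => [l0|[i b]] /=; first exact: cst_continuous.
  apply: cont_mulc; exact: coord_continuous.
pose fq (z : 'rV[R]_m) := \sum_i (z 0 i - y i 0) ^+ 2.
have cfq : continuous fq.
  apply: cont_sum => i; apply: cont_sq; apply: cont_subc; exact: coord_continuous.
have Z0 : Zset 0.
  exists 0; split; first exact: defo0.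
  by move=> i; rewrite mulmx0 !mxE.
pose rho := fq 0.
pose K := Zset `&` [set z | fq z <= rho].
have cK : closed K.
  apply: closedI => //.
  have -> : [set z | fq z <= rho] = fq @^-1` [set r | r <= rho] by [].
  by apply: preimage_closed; [move=> z _; exact: cfq | exact: closed_le].
pose B := rho + 1 + \sum_i `|y i 0|.
have KB : K `<=` [set z : 'rV[R]_m | forall i, `[- B, B] (z 0 i)].
  move=> z [_ fz] i /=; rewrite in_itv /=.
  have rho0 : 0 <= rho by apply: sumr_ge0 => j _; rewrite sqr_ge0.
  have zi : (z 0 i - y i 0) ^+ 2 <= rho.
    apply: le_trans fz; rewrite /fq (bigD1 i) //= lerDl.
    by apply: sumr_ge0 => j _; rewrite sqr_ge0.
  have yi : `|y i 0| <= \sum_i `|y i 0|.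
    by rewrite (bigD1 i) //= lerDl sumr_ge0.
  have a1 : `|z 0 i - y i 0| <= rho + 1.
    case: (lerP `|z 0 i - y i 0| 1) => h1; first lra.
    have : `|z 0 i - y i 0| <= `|z 0 i - y i 0| ^+ 2.
      by rewrite expr2 ler_peMr // ltW.
    by rewrite real_normK ?num_real //; lra.
  have := ler_normD (z 0 i - y i 0) (y i 0); rewrite subrK => h2.
  have : `|z 0 i| <= B by rewrite /B; lra.
  by rewrite ler_norml.
have compK : compact K.
  have cube : compact [set z : 'rV[R]_m | forall i, `[- B, B] (z 0 i)].
    by apply: (@rV_compact _ m (fun=> `[- B, B])) => i; exact: segment_compact.
  exact: (subclosed_compact cK cube KB).
have K0 : K !=set0 by exists 0; split => //=; rewrite /rho.
have [zs /set_mem [Zzs fzs] zmin] := EVT_min_rV K0 compK (continuous_subspaceT cfq).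
have [hs [Chs Ahs]] := Zzs.
exists hs; split => // h' Ch'.
rewrite /Fobj; apply: ler_wpM2l; first by rewrite invr_ge0 ler0n.
have E1 : \sum_i ((A *m hs) i 0 - y i 0) ^+ 2 = fq zs.
  by apply: eq_bigr => i _; rewrite Ahs.
rewrite -/A E1.
pose z' : 'rV[R]_m := (A *m h')^T.
have E2 : \sum_i ((A *m h') i 0 - y i 0) ^+ 2 = fq z'.
  by apply: eq_bigr => i _; rewrite /z' !mxE.
rewrite E2.
case: (lerP (fq z') rho) => hz'.
  apply: zmin; apply/mem_set; split => //.
  by exists h'; split => // i; rewrite /z' !mxE.
by apply: le_trans (ltW hz'); move: fzs.
Qed.

End Exist.


Section Main.
Variables (R : realType) (d n : nat) (v : 'I_n -> 'rV[R]_d).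
Variable S : {set {set 'I_n}}.
Hypotheses (sS : simplicial_fan v S) (pS : polytopal v S).
Variables (m : nat) (U : 'M[R]_(m, d)) (y : 'cV[R]_m).

Definition P3 := exists h : 'cV[R]_n, [/\ defo_cone v S h, AU v S U *m h = 0 & h != 0].

Lemma i_iii : ~ bounded_vecs (lse v S U y) -> P3.
Proof.
move=> nb.
have [h1 L1] : exists h1, lse v S U y h1.
  by apply: contrapT => ne; apply: nb; exists 0 => h Lh; exfalso; apply: ne; exists h.
pose z := AU v S U *m h1.
have Az : forall h, lse v S U y h -> AU v S U *m h = z.
  by move=> h Lh; apply: (lse_sameA sS pS Lh L1).
have [k Hk] : exists k, forall M, exists h, lse v S U y h /\ M < `|h k 0|.
  apply: contrapT => nk; apply: nb.
  have : forall k, exists M, forall h, lse v S U y h -> `|h k 0| <= M.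
    move=> k; apply: contrapT => H; apply: nk; exists k => M.
    apply: contrapT => H2; apply: H; exists M => h Lh; rewrite leNgt; apply/negP => lt.
    by apply: H2; exists h.
  case/(@choice _ _ (fun k M => forall h, lse v S U y h -> `|h k 0| <= M)) => Mf HMf.
  exists (\sum_k `|Mf k|) => h Lh k.
  apply: le_trans (HMf k h Lh) _; apply: le_trans (ler_norm _) _.
  by rewrite (bigD1 k) //= lerDl sumr_ge0.
have [s Hs] : exists s : R, forall T, exists h, lse v S U y h /\ T <= s * h k 0.
  case: (pselect (forall T, exists h, lse v S U y h /\ T <= h k 0)) => [H|].
    by exists 1 => T; have [h [Lh le]] := H T; exists h; rewrite mul1r.
  move/existsNP => [T1 HT1]; exists (-1) => T.
  have [h [Lh lt]] := Hk (`|T| + `|T1|); exists h; split => //.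
  have hT1 : h k 0 < T1 by rewrite ltNge; apply/negP => le; apply: HT1; exists h.
  have := ler_norm T; have := ler_norm T1; have := normr_ge0 T; have := normr_ge0 T1.
  case: (lerP 0 (h k 0)) => hs; [rewrite (ger0_norm hs) in lt | rewrite (ltr0_norm hs) in lt]; lra.
have [g [Cg Ag gk]] := recession sS (U := U) (z := z) (k := k) (s := s)
  (fun T => let: ex_intro h (conj Lh le) := Hs T in
            ex_intro _ h (conj ((lse_iff sS pS U y h).1 Lh).1 (conj (Az h Lh) le))).
exists g; split => //; apply/eqP => g0; move: gk; rewrite g0 mxE mulr0; lra.
Qed.

Lemma iii_ii : P3 -> exists (P : set 'rV[R]_d) (h : 'cV[R]_n),
         [/\ in_defo v S P, h = suppvec v P, P = Ph v h, h != 0 &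
             forall i : 'I_m, suppf P (row i U) = 0].
Proof.
move=> [g [[P [dP gE]] Ag g0]]; exists P, g; split => //.
  by rewrite gE; exact: (defo_Ph pS dP).
by move=> i; rewrite -(AU_suppvec U i sS pS dP) -gE Ag mxE.
Qed.

Lemma ii_iii : (exists (P : set 'rV[R]_d) (h : 'cV[R]_n),
         [/\ in_defo v S P, h = suppvec v P, P = Ph v h, h != 0 &
             forall i : 'I_m, suppf P (row i U) = 0]) -> P3.
Proof.
move=> [P [h [dP hE _ h0 Hs]]]; exists h; split => //; first by exists P.
by apply/matrixP => i j; rewrite (ord1 j) hE (AU_suppvec U i sS pS dP) Hs mxE.
Qed.

Lemma iii_i : P3 -> ~ bounded_vecs (lse v S U y).
Proof.
move=> [g [Cg Ag g0]] [M HM].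
have [h0 [C0 min0]] := exist_min sS U y.
have [k gk] : exists k, g k 0 != 0.
  apply: contrapT => H; move/negP: g0; apply; apply/eqP/matrixP => i j.
  rewrite (ord1 j) mxE; apply: contrapT => ne; apply: H; exists i; exact/eqP.
have gpos : 0 < `|g k 0| by rewrite normr_gt0.
pose t := (`|M| + `|h0 k 0| + 1) / `|g k 0|.
have t0 : 0 <= t by rewrite divr_ge0 // addr_ge0 // addr_ge0.
pose ht := 1 *: h0 + t *: g.
have Aht : AU v S U *m ht = AU v S U *m h0.
  by rewrite mulmxDr -!scalemxAr Ag scaler0 addr0 scale1r.
have Lht : lse v S U y ht.
  apply/(lse_iff sS pS); split; first by apply: defo_comb; rewrite ?ler01.
  by move=> h' Ch'; rewrite /Fobj Aht; apply: min0.
have := HM _ Lht k; rewrite /ht !mxE mul1r.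
have e : `|t * g k 0| = `|M| + `|h0 k 0| + 1.
  by rewrite normrM ger0_norm // /t mulfVK // gt_eqF.
have := ler_normD (h0 k 0 + t * g k 0) (- h0 k 0).
have e2 : h0 k 0 + t * g k 0 + - h0 k 0 = t * g k 0 by ring.
rewrite e2 normrN e.
have := ler_norm M; lra.
Qed.

End Main.


Unset Implicit Arguments.

Theorem proposition3p3 (R : realType) (d n m : nat) (v : 'I_n -> 'rV[R]_d)
  (S : {set {set 'I_n}}) (U : 'M[R]_(m, d)) (y : 'cV[R]_m) :
  simplicial_fan v S -> polytopal v S ->
  [<-> ~ bounded_vecs (lse v S U y);
       exists (P : set 'rV[R]_d) (h : 'cV[R]_n),
         [/\ in_defo v S P, h = suppvec v P, P = Ph v h, h != 0 &
             forall i : 'I_m, suppf P (row i U) = 0];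
       exists h : 'cV[R]_n, [/\ defo_cone v S h, AU v S U *m h = 0 & h != 0]].
Proof.
move=> sS pS; tfae.
- by move=> H; apply: (iii_ii sS pS); exact: (i_iii sS pS H).
- exact: (ii_iii sS pS).
- exact: (iii_i sS pS).
Qed.
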